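(* Let $C\subseteq\omega$ be noncomputable and let $A\subseteq\omega$ be an infinite set whose complement $\omega\setminus A$ is hyperimmune. Then there is an infinite subset $G\subseteq A$ which does not compute $C$. *)

(* Defs.v *)
(* Oracle computability via Kleene's mu-recursive functions
   relative to an oracle X : nat -> bool (characteristic function of a set). *)
From Stdlib Require Import Arith List.
Import ListNotations.

Inductive prog : Type :=
| PZero : prog
| PSucc : prog
| PProj : nat -> prog
| POrc  : prog
| PComp : prog -> list prog -> prog
| PRec  : prog -> prog -> prog
| PMu   : prog -> prog.

Inductive eval (X : nat -> bool) : prog -> list nat -> nat -> Prop :=
| ev_zero : forall xs, eval X PZero xs 0
| ev_succ : forall x xs, eval X PSucc (x :: xs) (S x)
| ev_proj : forall i xs v, nth_error xs i = Some v -> eval X (PProj i) xs v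
| ev_orc  : forall x xs, eval X POrc (x :: xs) (if X x then 1 else 0)
| ev_comp : forall f gs xs ys v,
    evals X gs xs ys -> eval X f ys v -> eval X (PComp f gs) xs v
| ev_rec0 : forall f g xs v, eval X f xs v -> eval X (PRec f g) (0 :: xs) v
| ev_recS : forall f g n xs w v,
    eval X (PRec f g) (n :: xs) w -> eval X g (n :: w :: xs) v ->
    eval X (PRec f g) (S n :: xs) v
| ev_mu : forall f xs y,
    eval X f (y :: xs) 0 ->
    (forall z, z < y -> exists k, eval X f (z :: xs) (S k)) ->
    eval X (PMu f) xs y
with evals (X : nat -> bool) : list prog -> list nat -> list nat -> Prop :=
| evs_nil : forall xs, evals X nil xs nil
| evs_cons : forall g gs xs y ys,
    eval X g xs y -> evals X gs xs ys -> evals X (g :: gs) xs (y :: ys).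

Definition empty_oracle : nat -> bool := fun _ => false.

Definition turing_computes (X C : nat -> bool) : Prop :=
  exists p : prog, forall n, eval X p [n] (if C n then 1 else 0).

Definition computable_set (C : nat -> bool) : Prop :=
  turing_computes empty_oracle C.

Definition computable_fun (f : nat -> nat) : Prop :=
  exists p : prog, forall n, eval empty_oracle p [n] (f n).

Definition infinite_set (A : nat -> bool) : Prop :=
  forall m, exists n, m <= n /\ A n = true.

Definition principal_function (B : nat -> bool) (p : nat -> nat) : Prop :=
  (forall n, p n < p (S n)) /\ (forall x, B x = true <-> exists n, p n = x).

Definition hyperimmune (B : nat -> bool) : Prop :=
  infinite_set B /\
  forall p, principal_function B p ->
  forall f, computable_fun f -> exists n, f n < p n.

Definition subset (G A : nat -> bool) : Prop := forall n, G n = true -> A n = true.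

(* Main.v *)
Require Import Defs.
From Stdlib Require Import Arith List Lia Bool Classical ClassicalEpsilon Cantor.
Import ListNotations.

Fixpoint rr (F : nat) (Gf : nat -> nat -> nat) (n : nat) : nat :=
  match n with
  | 0 => F
  | S n => let w := rr F Gf n in if w =? 0 then 0 else Gf n (pred w)
  end.

Fixpoint ms (val : nat -> nat) (t : nat) : nat :=
  match t with
  | 0 => 0
  | S t => let st := ms val t in
           if st =? 0 then match val t with 0 => 1 | 1 => t + 2 | _ => 0 end
           else st
  end.

Fixpoint sim (O : nat -> bool) (s : nat) (p : prog) (xs : list nat) {struct p} : nat :=
  match p with
  | PZero => 1
  | PSucc => match xs with x :: _ => S (S x) | [] => 0 end
  | PProj i => match nth_error xs i with Some v => S v | None => 0 end
  | POrc => match xs with x :: _ => S (if O x then 1 else 0) | [] => 0 end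
  | PComp f gs =>
      let ys := map (fun g => sim O s g xs) gs in
      if forallb (fun y => negb (y =? 0)) ys then sim O s f (map pred ys) else 0
  | PRec f g =>
      match xs with
      | [] => 0
      | n :: xs' => rr (sim O s f xs') (fun n w => sim O s g (n :: w :: xs')) n
      end
  | PMu f =>
      match ms (fun t => sim O s f (t :: xs)) s with
      | S (S y) => S y
      | _ => 0
      end
  end.

Definition prog_ind' (P : prog -> Prop)
  (H0 : P PZero) (H1 : P PSucc) (H2 : forall i, P (PProj i)) (H3 : P POrc)
  (H4 : forall f gs, P f -> Forall P gs -> P (PComp f gs))
  (H5 : forall f g, P f -> P g -> P (PRec f g))
  (H6 : forall f, P f -> P (PMu f)) : forall p, P p :=
  fix F p := match p with
  | PZero => H0 | PSucc => H1 | PProj i => H2 i | POrc => H3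
  | PComp f gs => H4 f gs (F f)
      ((fix L gs := match gs return Forall P gs with
         | [] => Forall_nil _ | g :: gs => Forall_cons _ (F g) (L gs) end) gs)
  | PRec f g => H5 f g (F f) (F g)
  | PMu f => H6 f (F f)
  end.

Lemma ms_spec val t y :
  ms val t = S (S y) <-> (y < t /\ val y = 1 /\ forall w, w < y -> exists k, val w = S (S k)).
Proof.
  induction t as [|t IH]; simpl.
  - split; [discriminate| lia].
  - assert (Hz : ms val t = 0 <-> forall w, w < t -> exists k, val w = S (S k)).
    { clear IH. induction t as [|t IHt]; simpl.
      - split; [intros; lia| reflexivity].
      - destruct (ms val t =? 0) eqn:E.
        + apply Nat.eqb_eq in E. split.
          * intros H w Hw. destruct (val t) as [|[|k]] eqn:V; try (exfalso; lia).
            destruct (Nat.eq_dec w t); [subst; eauto|]. apply IHt; auto; lia.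
          * intros H. destruct (H t ltac:(lia)) as [k Hk]. rewrite Hk. reflexivity.
        + apply Nat.eqb_neq in E. split; [intro; contradiction|].
          intros H. exfalso. apply E. apply IHt. intros; apply H; lia. }
    destruct (ms val t =? 0) eqn:E.
    + apply Nat.eqb_eq in E. pose proof (proj1 Hz E) as Hall.
      destruct (val t) as [|[|k]] eqn:V.
      * split; [discriminate|]. intros (Hy & Hv & Hw).
        destruct (Nat.eq_dec y t); [subst; congruence|].
        destruct (Hall y ltac:(lia)); congruence.
      * split.
        -- intros H. assert (y = t) by lia. subst. repeat split; auto.
        -- intros (Hy & Hv & Hw). destruct (Nat.eq_dec y t); [subst; lia|].
           destruct (Hall y ltac:(lia)); congruence.
      * split; [discriminate|]. intros (Hy & Hv & Hw).
        destruct (Nat.eq_dec y t); [subst; congruence|].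
        destruct (Hall y ltac:(lia)); congruence.
    + apply Nat.eqb_neq in E. rewrite IH. split.
      * intros (? & ? & ?). repeat split; auto.
      * intros (Hy & Hv & Hw). destruct (Nat.eq_dec y t).
        -- subst. exfalso. apply E, Hz. auto.
        -- repeat split; auto; lia.
Qed.

Lemma ms_ext val val' t : (forall u, u < t -> val u = val' u) -> ms val t = ms val' t.
Proof.
  induction t; simpl; intros H; auto.
  rewrite IHt by (intros; apply H; lia). rewrite H by lia. reflexivity.
Qed.

Lemma rr_ext F Gf F' Gf' n :
  F = F' -> (forall m, m < n -> rr F Gf m <> 0 -> Gf m (pred (rr F Gf m)) = Gf' m (pred (rr F Gf m))) ->
  rr F Gf n = rr F' Gf' n.
Proof.
  intros HF. induction n; simpl; intros H; auto.
  rewrite <- IHn by (intros; apply H; auto; lia).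
  destruct (rr F Gf n =? 0) eqn:E; auto.
  apply H; auto. apply Nat.eqb_neq; auto.
Qed.

Definition agree (O O' : nat -> bool) U := forall z, z < U -> O z = O' z.

Lemma uniform_bound (Q : nat -> nat -> Prop) N :
  (forall t U U', U <= U' -> Q t U -> Q t U') ->
  (forall t, t < N -> exists U, Q t U) -> exists U, forall t, t < N -> Q t U.
Proof.
  intros Hm. induction N; intros H.
  - exists 0; intros; lia.
  - destruct IHN as [U HU]. { intros; apply H; lia. }
    destruct (H N ltac:(lia)) as [U2 HU2].
    exists (U + U2). intros t Ht. destruct (Nat.eq_dec t N).
    + subst. eapply Hm; [|eauto]; lia.
    + eapply Hm; [|apply HU; lia]; lia.
Qed.

Lemma sim_local O s p : forall xs, exists U, forall O', agree O O' U -> sim O' s p xs = sim O s p xs.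
Proof.
  induction p using prog_ind'; intros xs; simpl.
  - exists 0; auto.
  - exists 0; auto.
  - exists 0; auto.
  - destruct xs as [|x xs]. exists 0; auto. exists (S x). intros O' H. rewrite (H x); auto.
  - assert (Hg : exists U, forall O', agree O O' U -> map (fun g => sim O' s g xs) gs = map (fun g => sim O s g xs) gs).
    { induction H as [|g gs Hg Hgs IH].
      - exists 0; auto.
      - destruct IH as [U1 HU1]. destruct (Hg xs) as [U2 HU2]. exists (U1 + U2).
        intros O' HO. simpl. rewrite HU1, HU2; auto; intros z Hz; apply HO; lia. }
    destruct Hg as [U1 HU1].
    destruct (IHp (map pred (map (fun g => sim O s g xs) gs))) as [U2 HU2].
    exists (U1 + U2). intros O' HO. rewrite HU1 by (intros z Hz; apply HO; lia).
    destruct forallb; auto. apply HU2. intros z Hz; apply HO; lia.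
  - destruct xs as [|n xs']. exists 0; auto.
    destruct (IHp1 xs') as [U1 HU1].
    destruct (uniform_bound (fun m U => forall O', agree O O' U ->
       sim O' s p2 (m :: pred (rr (sim O s p1 xs') (fun n w => sim O s p2 (n :: w :: xs')) m) :: xs') =
       sim O s p2 (m :: pred (rr (sim O s p1 xs') (fun n w => sim O s p2 (n :: w :: xs')) m) :: xs')) n)
      as [U2 HU2].
    { intros t U U' HUU HQ O' HO. apply HQ. intros z Hz; apply HO; lia. }
    { intros t Ht. apply IHp2. }
    exists (U1 + U2). intros O' HO. symmetry. apply rr_ext.
    + symmetry; apply HU1; intros z Hz; apply HO; lia.
    + intros m Hm _. symmetry. apply HU2; auto. intros z Hz; apply HO; lia.
  - destruct (uniform_bound (fun t U => forall O', agree O O' U -> sim O' s p (t :: xs) = sim O s p (t :: xs)) s)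
      as [U HU].
    { intros t U U' HUU HQ O' HO. apply HQ. intros z Hz; apply HO; lia. }
    { intros t Ht. apply IHp. }
    exists U. intros O' HO. rewrite (ms_ext (fun t => sim O' s p (t :: xs)) (fun t => sim O s p (t :: xs))); auto.
Qed.

Lemma sim_mono O p : forall s s' xs, s <= s' -> sim O s p xs <> 0 -> sim O s' p xs = sim O s p xs.
Proof.
  induction p using prog_ind'; intros s s' xs Hs Hnz; simpl in *; auto.
  - destruct (forallb (fun y => negb (y =? 0)) (map (fun g => sim O s g xs) gs)) eqn:E; [|congruence].
    assert (Hm : map (fun g => sim O s' g xs) gs = map (fun g => sim O s g xs) gs).
    { clear IHp Hnz. induction H as [|g gs Hg Hgs IH]; simpl in *; auto.
      apply Bool.andb_true_iff in E. destruct E as [E1 E2].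
      rewrite IH by auto. rewrite (Hg s s' xs); auto. intro C; rewrite C in E1; discriminate. }
    rewrite Hm, E. apply IHp; auto.
  - destruct xs as [|n xs']; auto.
    assert (forall m, rr (sim O s p1 xs') (fun n w => sim O s p2 (n :: w :: xs')) m <> 0 ->
       rr (sim O s' p1 xs') (fun n w => sim O s' p2 (n :: w :: xs')) m =
       rr (sim O s p1 xs') (fun n w => sim O s p2 (n :: w :: xs')) m).
    { induction m; simpl; intros H; auto.
      destruct (rr (sim O s p1 xs') (fun n w => sim O s p2 (n :: w :: xs')) m =? 0) eqn:E; [congruence|].
      apply Nat.eqb_neq in E. rewrite IHm by auto.
      rewrite (proj2 (Nat.eqb_neq _ _) E). apply IHp2; auto. }
    auto.
  - destruct (ms (fun t => sim O s p (t :: xs)) s) as [|[|y]] eqn:E; try congruence.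
    apply ms_spec in E. destruct E as (Hy & Hv & Hw).
    assert (E' : ms (fun t => sim O s' p (t :: xs)) s' = S (S y)).
    { apply ms_spec. repeat split; try lia.
      - rewrite (IHp s s'); auto; lia.
      - intros w Hw'. destruct (Hw w Hw') as [k Hk]. exists k. rewrite (IHp s s'); auto; lia. }
    rewrite E'. reflexivity.
Qed.

Lemma sim_sound O p : forall s xs v, sim O s p xs = S v -> eval O p xs v.
Proof.
  induction p using prog_ind'; intros s xs v Hs; simpl in *.
  - injection Hs; intros; subst; constructor.
  - destruct xs; [discriminate|]. injection Hs; intros; subst; constructor.
  - destruct (nth_error xs i) eqn:E; [|discriminate]. injection Hs; intros; subst; constructor; auto.
  - destruct xs; [discriminate|]. injection Hs; intros; subst; constructor.
  - destruct (forallb (fun y => negb (y =? 0)) (map (fun g => sim O s g xs) gs)) eqn:E; [|discriminate].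
    econstructor; [|eapply IHp; eauto].
    clear IHp Hs. induction H as [|g gs Hg Hgs IH]; simpl in *; constructor.
    + apply Bool.andb_true_iff in E. destruct E as [E1 _].
      destruct (sim O s g xs) eqn:Eg; [discriminate|]. simpl. eapply Hg; eauto.
    + apply IH. apply Bool.andb_true_iff in E; tauto.
  - destruct xs as [|n xs']; [discriminate|].
    revert v Hs. induction n; simpl; intros v Hs.
    + constructor. eapply IHp1; eauto.
    + destruct (rr (sim O s p1 xs') (fun n w => sim O s p2 (n :: w :: xs')) n) eqn:E; [discriminate|].
      simpl in Hs. econstructor; [apply IHn; reflexivity|]. eapply IHp2; eauto.
  - destruct (ms (fun t => sim O s p (t :: xs)) s) as [|[|y]] eqn:E; try discriminate.
    injection Hs; intros; subst. apply ms_spec in E. destruct E as (Hy & Hv & Hw).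
    constructor.
    + eapply IHp; eauto.
    + intros z Hz. destruct (Hw z Hz) as [k Hk]. exists k. eapply IHp; eauto.
Qed.

Lemma sim_mono' O p s s' xs v : s <= s' -> sim O s p xs = S v -> sim O s' p xs = S v.
Proof. intros H E. rewrite (sim_mono O p s s'); auto; congruence. Qed.

Fixpoint sim_complete O p xs v (H : eval O p xs v) {struct H} : exists s, sim O s p xs = S v
with sims_complete O gs xs ys (H : evals O gs xs ys) {struct H} :
  exists s, map (fun g => sim O s g xs) gs = map S ys /\
    forall s', s <= s' -> map (fun g => sim O s' g xs) gs = map S ys.
Proof.
  - destruct H.
    + exists 0; reflexivity.
    + exists 0; reflexivity.
    + exists 0; simpl; rewrite H; reflexivity.
    + exists 0; reflexivity.
    + destruct (sims_complete _ _ _ _ H) as [s1 [_ Hs1]].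
      destruct (sim_complete _ _ _ _ H0) as [s2 Hs2].
      exists (s1 + s2). simpl. rewrite (Hs1 (s1 + s2)) by lia.
      assert (forallb (fun y => negb (y =? 0)) (map S ys) = true).
      { clear. induction ys; simpl; auto. }
      rewrite H1. rewrite map_map. simpl. rewrite map_id. eapply sim_mono'; [|eauto]; lia.
    + destruct (sim_complete _ _ _ _ H) as [s1 Hs1]. exists s1. simpl. auto.
    + destruct (sim_complete _ _ _ _ H) as [s1 Hs1].
      destruct (sim_complete _ _ _ _ H0) as [s2 Hs2].
      exists (s1 + s2). pose proof (sim_mono' _ _ s1 (s1 + s2) _ _ ltac:(lia) Hs1) as Hs1'.
      simpl in Hs1' |- *. rewrite Hs1'. simpl.
      eapply sim_mono'; [|eauto]; lia.
    + assert (Hz : forall z, z < y -> exists s k, sim O s f (z :: xs) = S (S k)).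
      { intros z Hz. destruct (H0 z Hz) as [k Hk]. destruct (sim_complete _ _ _ _ Hk) as [s Hs].
        exists s, k. exact Hs. }
      destruct (sim_complete _ _ _ _ H) as [s1 Hs1].
      destruct (uniform_bound (fun z s => exists k, sim O s f (z :: xs) = S (S k)) y) as [s2 Hs2].
      { intros t U U' HU [k Hk]. exists k. eapply sim_mono'; eauto. }
      { intros z Hz'. destruct (Hz z Hz') as [s [k Hk]]. eauto. }
      exists (S (y + s1 + s2)). cbn [sim].
      assert (E : ms (fun t => sim O (S (y + s1 + s2)) f (t :: xs)) (S (y + s1 + s2)) = S (S y)).
      { apply ms_spec. repeat split.
        - lia.
        - eapply sim_mono'; [|eauto]; lia.
        - intros w Hw. destruct (Hs2 w Hw) as [k Hk]. exists k. eapply sim_mono'; [|eauto]; lia. }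
      rewrite E. reflexivity.
  - destruct H.
    + exists 0. split; auto.
    + destruct (sim_complete _ _ _ _ H) as [s1 Hs1].
      destruct (sims_complete _ _ _ _ H0) as [s2 [_ Hs2]].
      exists (s1 + s2). split.
      * simpl. rewrite (Hs2 (s1 + s2)) by lia. f_equal. eapply sim_mono'; [|eauto]; lia.
      * intros s' Hs'. simpl. rewrite (Hs2 s') by lia. f_equal. eapply sim_mono'; [|eauto]; lia.
Qed.

Lemma eval_det O p xs v v' : eval O p xs v -> eval O p xs v' -> v = v'.
Proof.
  intros H H'. destruct (sim_complete _ _ _ _ H) as [s Hs].
  destruct (sim_complete _ _ _ _ H') as [s' Hs'].
  apply (sim_mono' O p s (s + s') xs v ltac:(lia)) in Hs.
  apply (sim_mono' O p s' (s + s') xs v' ltac:(lia)) in Hs'. congruence.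
Qed.

Lemma eval_local O p xs v : eval O p xs v ->
  exists U, forall O', agree O O' U -> eval O' p xs v.
Proof.
  intros H. destruct (sim_complete _ _ _ _ H) as [s Hs].
  destruct (sim_local O s p xs) as [U HU]. exists U. intros O' HO.
  eapply sim_sound. rewrite HU; eauto.
Qed.

Lemma eval_eq X p xs v v' : eval X p xs v -> v = v' -> eval X p xs v'.
Proof. intros H ->; exact H. Qed.

Fixpoint K (n : nat) : prog := match n with 0 => PZero | S n => PComp PSucc [K n] end.

Lemma K_ok X n xs : eval X (K n) xs n.
Proof. induction n; simpl; repeat econstructor; eauto. Qed.

Ltac evc := repeat (first [ apply evs_nil | eapply evs_cons ]).

Definition PRED := PComp (PRec PZero (PProj 0)) [PProj 0].
Lemma PRED_ok X x xs : eval X PRED (x :: xs) (pred x).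
Proof.
  unfold PRED. eapply ev_comp. { evc. constructor; reflexivity. }
  induction x; simpl. { repeat constructor. }
  econstructor; [exact IHx|]. constructor. reflexivity.
Qed.

Definition ADD := PRec (PProj 0) (PComp PSucc [PProj 1]).
Lemma ADD_ok X x y xs : eval X ADD (x :: y :: xs) (x + y).
Proof.
  unfold ADD. induction x; simpl. { constructor; constructor; reflexivity. }
  econstructor; [exact IHx|]. eapply ev_comp. { evc. constructor; reflexivity. } constructor.
Qed.

Definition SUB := PComp (PRec (PProj 0) (PComp PRED [PProj 1])) [PProj 1; PProj 0].
Lemma SUB_ok X x y xs : eval X SUB (x :: y :: xs) (x - y).
Proof.
  unfold SUB. eapply ev_comp. { evc; constructor; reflexivity. }
  induction y; simpl. { constructor; constructor. rewrite Nat.sub_0_r; reflexivity. }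
  econstructor; [exact IHy|]. eapply ev_comp. { evc. constructor; reflexivity. }
  eapply eval_eq; [apply PRED_ok|]. lia.
Qed.

Definition MUL := PRec (K 0) (PComp ADD [PProj 1; PProj 2]).
Lemma MUL_ok X x y xs : eval X MUL (x :: y :: xs) (x * y).
Proof.
  unfold MUL. induction x; simpl. { constructor; exact (K_ok _ 0 _). }
  econstructor; [exact IHx|]. eapply ev_comp. { evc; constructor; reflexivity. }
  eapply eval_eq; [apply ADD_ok|]. lia.
Qed.

Definition sgn (x : nat) := match x with 0 => 0 | _ => 1 end.
Definition SGN := PComp (PRec PZero (K 1)) [PProj 0].
Lemma SGN_ok X x xs : eval X SGN (x :: xs) (sgn x).
Proof.
  unfold SGN. eapply ev_comp. { evc; constructor; reflexivity. }
  destruct x; simpl. { repeat constructor. }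
  assert (forall n, exists w, eval X (PRec PZero (K 1)) [n] w).
  { induction n. eexists; repeat constructor. destruct IHn as [w Hw]. eexists. econstructor; [exact Hw|]. exact (K_ok _ 1 _). }
  destruct (H x) as [w Hw]. econstructor; [exact Hw|]. exact (K_ok _ 1 _).
Qed.

Definition NSGN := PComp (PRec (K 1) PZero) [PProj 0].
Lemma NSGN_ok X x xs : eval X NSGN (x :: xs) (1 - sgn x).
Proof.
  unfold NSGN. eapply ev_comp. { evc; constructor; reflexivity. }
  destruct x; simpl. { constructor; exact (K_ok _ 1 _). }
  assert (forall n, exists w, eval X (PRec (K 1) PZero) [n] w).
  { induction n. eexists; constructor; exact (K_ok _ 1 _). destruct IHn as [w Hw]. eexists. econstructor; [exact Hw|]. constructor. }
  destruct (H x) as [w Hw]. econstructor; [exact Hw|]. constructor.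
Qed.

Definition PAR := PComp (PRec PZero (PComp NSGN [PProj 1])) [PProj 0].
Lemma PAR_ok X x xs : eval X PAR (x :: xs) (x mod 2).
Proof.
  unfold PAR. eapply ev_comp. { evc; constructor; reflexivity. }
  induction x. { repeat constructor. }
  econstructor; [exact IHx|]. eapply ev_comp. { evc; constructor; reflexivity. }
  eapply eval_eq; [apply NSGN_ok|].
  assert (M0 : forall k, (k * 2) mod 2 = 0) by (intros; apply Nat.Div0.mod_mul; lia).
  assert (M1 : forall k, (1 + k * 2) mod 2 = 1) by (intros; rewrite Nat.Div0.mod_add; auto).
  destruct (Nat.Even_or_Odd x) as [[k ->]|[k ->]].
  - replace (2 * k) with (k * 2) by lia. replace (S (k * 2)) with (1 + k * 2) by lia.
    rewrite M0, M1. reflexivity.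
  - replace (2 * k + 1) with (1 + k * 2) by lia. replace (S (1 + k * 2)) with ((S k) * 2) by lia.
    rewrite M0, M1. reflexivity.
Qed.

Definition POW2 := PComp (PRec (K 1) (PComp ADD [PProj 1; PProj 1])) [PProj 0].
Lemma POW2_ok X x xs : eval X POW2 (x :: xs) (2 ^ x).
Proof.
  unfold POW2. eapply ev_comp. { evc; constructor; reflexivity. }
  induction x. { constructor; exact (K_ok _ 1 _). }
  econstructor; [exact IHx|]. eapply ev_comp. { evc; constructor; reflexivity. }
  eapply eval_eq; [apply ADD_ok|]. simpl; lia.
Qed.

Definition DIVF := PComp NSGN [PComp SUB [PComp MUL [PComp PSucc [PProj 0]; PProj 2]; PProj 1]].
Lemma DIVF_ok X q c d xs : eval X DIVF (q :: c :: d :: xs) (1 - sgn (S q * d - c)).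
Proof.
  unfold DIVF. eapply ev_comp. { evc. eapply ev_comp. { evc. eapply ev_comp.
  { evc. eapply ev_comp. { evc. constructor; reflexivity. } constructor. constructor; reflexivity. }
  apply MUL_ok. constructor; reflexivity. } apply SUB_ok. } apply NSGN_ok.
Qed.

Definition DIV := PMu DIVF.
Lemma DIV_ok X c d xs : 0 < d -> eval X DIV (c :: d :: xs) (c / d).
Proof.
  intros Hd. unfold DIV. constructor.
  - eapply eval_eq; [apply DIVF_ok|].
    pose proof (Nat.mod_upper_bound c d ltac:(lia)). pose proof (Nat.div_mod c d ltac:(lia)).
    assert (S (c / d) * d - c <> 0) by (simpl; lia).
    destruct (S (c / d) * d - c); [lia|reflexivity].
  - intros z Hz. exists 0. eapply eval_eq; [apply DIVF_ok|].
    assert (S z <= c / d) by lia.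
    assert (S z * d <= c / d * d) by (apply Nat.mul_le_mono_r; auto).
    pose proof (Nat.div_mod c d ltac:(lia)).
    replace (S z * d - c) with 0 by lia. reflexivity.
Qed.

Definition BIT := PComp PAR [PComp DIV [PProj 0; PComp POW2 [PProj 1]]].
Lemma BIT_ok X c x xs : eval X BIT (c :: x :: xs) (Nat.b2n (Nat.testbit c x)).
Proof.
  unfold BIT. eapply ev_comp. { evc. eapply ev_comp.
  { evc. constructor; reflexivity. eapply ev_comp. { evc; constructor; reflexivity. } apply POW2_ok. }
  apply DIV_ok. apply Nat.neq_0_lt_0, Nat.pow_nonzero; lia. }
  eapply eval_eq; [apply PAR_ok|]. rewrite Nat.testbit_spec'. reflexivity.
Qed.

Definition stepf (st t v : nat) : nat :=
  if st =? 0 then match v with 0 => 1 | 1 => t + 2 | _ => 0 end else st.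

(* STEP [st; t; v] = (1 - sgn st) * ((1 - sgn v) + (sgn v * (1 - sgn (pred v))) * (t+2)) + st *)
Definition STEP :=
  PComp ADD [PComp MUL [PComp NSGN [PProj 0];
                        PComp ADD [PComp NSGN [PProj 2];
                                   PComp MUL [PComp MUL [PComp SGN [PProj 2]; PComp NSGN [PComp PRED [PProj 2]]];
                                              PComp PSucc [PComp PSucc [PProj 1]]]]];
             PProj 0].

Lemma STEP_ok X st t v xs : eval X STEP (st :: t :: v :: xs) (stepf st t v).
Proof.
  unfold STEP. eapply ev_comp.
  { evc.
    - eapply ev_comp. { evc.
      - eapply ev_comp. { evc. constructor; reflexivity. } apply NSGN_ok.
      - eapply ev_comp. { evc.
        + eapply ev_comp. { evc. constructor; reflexivity. } apply NSGN_ok.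
        + eapply ev_comp. { evc.
          * eapply ev_comp. { evc.
            -- eapply ev_comp. { evc. constructor; reflexivity. } apply SGN_ok.
            -- eapply ev_comp. { evc. eapply ev_comp. { evc. constructor; reflexivity. } apply PRED_ok. } apply NSGN_ok. }
            apply MUL_ok.
          * eapply ev_comp. { evc. eapply ev_comp. { evc. constructor; reflexivity. } constructor. } constructor. }
          apply MUL_ok. }
        apply ADD_ok. }
      apply MUL_ok.
    - constructor; reflexivity. }
  eapply eval_eq; [apply ADD_ok|].
  unfold stepf. destruct st; simpl.
  - destruct v as [|[|v]]; simpl; lia.
  - reflexivity.
Qed.

Definition projs k a := map (fun i => PProj (k + i)) (seq 0 a).

Lemma projs_ok X pre xs : evals X (projs (length pre) (length xs)) (pre ++ xs) xs.
Proof.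
  revert pre. induction xs as [|x xs IH]; intros pre; simpl. { constructor. }
  unfold projs. simpl. constructor.
  - constructor. rewrite Nat.add_0_r. rewrite nth_error_app2 by lia. rewrite Nat.sub_diag. reflexivity.
  - rewrite <- seq_shift, map_map.
    specialize (IH (pre ++ [x])). rewrite <- app_assoc in IH. simpl in IH.
    rewrite length_app in IH. simpl in IH.
    replace (length pre + 1) with (S (length pre)) in IH by lia.
    unfold projs in IH. erewrite map_ext; [exact IH|]. intros; simpl. f_equal; lia.
Qed.

Fixpoint prodsgn (l : list prog) : prog :=
  match l with [] => K 1 | g :: l => PComp MUL [PComp SGN [g]; prodsgn l] end.

Fixpoint comp (p : prog) (a : nat) : prog :=
  match p with
  | PZero => K 1
  | PSucc => match a with 0 => PZero | _ => PComp PSucc [PComp PSucc [PProj 2]] end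
  | PProj i => if i <? a then PComp PSucc [PProj (i + 2)] else PZero
  | POrc => match a with 0 => PZero | _ => PComp PSucc [PComp BIT [PProj 1; PProj 2]] end
  | PComp f gs =>
      PComp MUL [prodsgn (map (fun g => comp g a) gs);
                 PComp (comp f (length gs))
                   (PProj 0 :: PProj 1 :: map (fun cg => PComp PRED [cg]) (map (fun g => comp g a) gs))]
  | PRec f g =>
      match a with
      | 0 => PZero
      | S a' =>
        PComp (PRec (comp f a')
                 (PComp MUL [PComp SGN [PProj 1];
                             PComp (comp g (S a)) (PProj 2 :: PProj 3 :: PProj 0 :: PComp PRED [PProj 1] :: projs 4 a')]))
              (PProj 2 :: PProj 0 :: PProj 1 :: projs 3 a')
      end
  | PMu f =>
      PComp PRED [PComp (PRec (K 0) (PComp STEP [PProj 1; PProj 0;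
                   PComp (comp f (S a)) (PProj 2 :: PProj 3 :: PProj 0 :: projs 4 a)]))
                   (PProj 0 :: PProj 0 :: PProj 1 :: projs 2 a)]
  end.

Lemma evals_pred X l xs ys : evals X l xs ys -> evals X (map (fun cg => PComp PRED [cg]) l) xs (map pred ys).
Proof.
  induction 1; simpl; constructor; auto.
  eapply ev_comp. { constructor; [eauto|constructor]. } apply PRED_ok.
Qed.

Lemma prodsgn_ok X l xs ys : evals X l xs ys ->
  eval X (prodsgn l) xs (if forallb (fun y => negb (y =? 0)) ys then 1 else 0).
Proof.
  induction 1; simpl. { exact (K_ok _ 1 _). }
  eapply ev_comp. { evc. eapply ev_comp. { evc; eauto. } apply SGN_ok. exact IHevals. }
  eapply eval_eq; [apply MUL_ok|]. destruct y; simpl; auto.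
Qed.

Theorem comp_ok X p : forall a s c xs, length xs = a ->
  eval X (comp p a) (s :: c :: xs) (sim (Nat.testbit c) s p xs).
Proof.
  induction p using prog_ind'; intros a s c xs Ha; subst a; simpl.
  - exact (K_ok _ 1 _).
  - destruct xs as [|x xs]; simpl. { constructor. }
    eapply ev_comp. { evc. eapply ev_comp. { evc. constructor; reflexivity. } constructor. } constructor.
  - destruct (i <? length xs) eqn:E.
    + apply Nat.ltb_lt in E. destruct (nth_error xs i) eqn:E2.
      * eapply ev_comp. { evc. constructor. replace (i + 2) with (S (S i)) by lia. exact E2. } constructor.
      * apply nth_error_None in E2. lia.
    + apply Nat.ltb_ge in E. rewrite (proj2 (nth_error_None _ _) E). constructor.
  - destruct xs as [|x xs]; simpl. { constructor. }
    eapply ev_comp. { evc. eapply ev_comp. { evc; constructor; reflexivity. } apply BIT_ok. } constructor.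
  - set (ys := map (fun g => sim (Nat.testbit c) s g xs) gs).
    assert (Hl : evals X (map (fun g => comp g (length xs)) gs) (s :: c :: xs) ys).
    { subst ys. clear IHp. induction H; simpl; constructor; auto. }
    eapply ev_comp. { evc.
      - apply prodsgn_ok. exact Hl.
      - eapply ev_comp. { constructor. constructor; reflexivity. constructor. constructor; reflexivity.
          apply evals_pred. exact Hl. }
        apply IHp. subst ys. rewrite !length_map. reflexivity. }
    eapply eval_eq; [apply MUL_ok|]. destruct forallb; lia.
  - destruct xs as [|n xs']; simpl. { constructor. }
    eapply ev_comp.
    { constructor. constructor; reflexivity. constructor. constructor; reflexivity.
      constructor. constructor; reflexivity.
      exact (projs_ok X [s; c; n] xs'). }
    induction n; simpl.
    + constructor. apply IHp1. reflexivity.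
    + econstructor; [exact IHn|].
      eapply ev_comp. { evc.
        - eapply ev_comp. { evc; constructor; reflexivity. } apply SGN_ok.
        - eapply ev_comp.
          { constructor. constructor; reflexivity. constructor. constructor; reflexivity.
            constructor. constructor; reflexivity. constructor.
            eapply ev_comp. { evc; constructor; reflexivity. } apply PRED_ok.
            exact (projs_ok X [n; _; s; c] xs'). }
          apply IHp2. reflexivity. }
      eapply eval_eq; [apply MUL_ok|].
      destruct (rr (sim (Nat.testbit c) s p1 xs') (fun n w => sim (Nat.testbit c) s p2 (n :: w :: xs')) n); simpl; lia.
  - eapply ev_comp. { evc.
      eapply ev_comp.
      { constructor. constructor; reflexivity. constructor. constructor; reflexivity.
        constructor. constructor; reflexivity. exact (projs_ok X [s; c] xs). }
      assert (forall t, eval X (PRec (K 0) (PComp STEP [PProj 1; PProj 0;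
                   PComp (comp p (S (length xs))) (PProj 2 :: PProj 3 :: PProj 0 :: projs 4 (length xs))]))
                   (t :: s :: c :: xs) (ms (fun t => sim (Nat.testbit c) s p (t :: xs)) t)).
      { induction t; simpl.
        - constructor. exact (K_ok _ 0 _).
        - econstructor; [exact IHt|].
          eapply ev_comp. { evc. constructor; reflexivity. constructor; reflexivity.
            eapply ev_comp. { constructor. constructor; reflexivity. constructor. constructor; reflexivity.
              constructor. constructor; reflexivity. exact (projs_ok X [t; _; s; c] xs). }
            apply IHp. reflexivity. }
          eapply eval_eq; [apply STEP_ok|]. reflexivity. }
      apply H. }
    eapply eval_eq; [apply PRED_ok|].
    destruct (ms (fun t => sim (Nat.testbit c) s p (t :: xs)) s) as [|[|]]; reflexivity.
Qed.

Lemma lt_pow2 i : i < 2 ^ i.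
Proof. induction i; simpl; lia. Qed.

Lemma testbit_add_pow a n k i : a < 2 ^ n ->
  Nat.testbit (a + 2 ^ n * k) i = if i <? n then Nat.testbit a i else Nat.testbit k (i - n).
Proof.
  intros Ha. assert (Hp : 2 ^ n <> 0) by (apply Nat.pow_nonzero; lia).
  destruct (i <? n) eqn:E.
  - apply Nat.ltb_lt in E. rewrite <- (Nat.mod_pow2_bits_low _ n) by auto.
    rewrite Nat.mul_comm, Nat.Div0.mod_add, Nat.mod_small by auto. reflexivity.
  - apply Nat.ltb_ge in E. replace i with ((i - n) + n) at 1 by lia.
    rewrite <- Nat.div_pow2_bits. rewrite Nat.mul_comm, Nat.div_add by auto.
    rewrite Nat.div_small by auto. reflexivity.
Qed.

Lemma bit_le a i : Nat.testbit a i = true -> 2 ^ i <= a.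
Proof.
  intros H. destruct (Nat.eq_dec a 0). { subst. rewrite Nat.bits_0 in H. discriminate. }
  assert (i <= Nat.log2 a).
  { destruct (le_lt_dec i (Nat.log2 a)); auto. rewrite Nat.bits_above_log2 in H by auto. discriminate. }
  pose proof (Nat.log2_spec a ltac:(lia)).
  pose proof (Nat.pow_le_mono_r 2 _ _ ltac:(lia) H0). lia.
Qed.

Lemma bit_lt a i : Nat.testbit a i = true -> i < a.
Proof. intros H. pose proof (bit_le _ _ H). pose proof (lt_pow2 i). lia. Qed.

Fixpoint code_below (f : nat -> bool) (L : nat) : nat :=
  match L with 0 => 0 | S L => code_below f L + 2 ^ L * Nat.b2n (f L) end.

Lemma code_lt f L : code_below f L < 2 ^ L.
Proof. induction L; simpl; auto. destruct (f L); simpl; lia. Qed.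

Lemma code_bit f L i : Nat.testbit (code_below f L) i = (i <? L) && f i.
Proof.
  induction L; cbn [code_below]. { rewrite Nat.bits_0. destruct i; reflexivity. }
  rewrite testbit_add_pow by apply code_lt.
  destruct (i <? L) eqn:E.
  - rewrite IHL. apply Nat.ltb_lt in E. rewrite (proj2 (Nat.ltb_lt i (S L))) by lia. reflexivity.
  - apply Nat.ltb_ge in E. destruct (Nat.eq_dec i L).
    + subst. rewrite Nat.sub_diag. rewrite (proj2 (Nat.ltb_lt L (S L))) by lia.
      destruct (f L); reflexivity.
    + rewrite (proj2 (Nat.ltb_ge i (S L))) by lia.
      destruct (f L); simpl; [|apply Nat.bits_0].
      destruct (i - L) eqn:E2; [lia|]. destruct n0; [reflexivity|]. cbn. apply Nat.bits_0.
Qed.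

Lemma code_bit_true f L i : i < L -> f i = true -> Nat.testbit (code_below f L) i = true.
Proof. intros. rewrite code_bit, H0. apply Nat.ltb_lt in H. rewrite H. reflexivity. Qed.

Fixpoint sumf (f : nat -> nat) (j : nat) : nat :=
  match j with 0 => 0 | S j => sumf f j + f j end.

Lemma sumf_nz f j : sumf f j <> 0 <-> exists i, i < j /\ f i <> 0.
Proof.
  induction j; simpl. { split; [lia|]. intros (i & H & _); lia. }
  split.
  - intros H. destruct (Nat.eq_dec (f j) 0).
    + destruct (proj1 IHj ltac:(lia)) as (i & ? & ?). exists i; split; auto; lia.
    + exists j; auto.
  - intros (i & Hi & Hf). destruct (Nat.eq_dec i j). subst; lia.
    assert (sumf f j <> 0) by (apply IHj; exists i; split; auto; lia). lia.
Qed.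


Lemma least_nat (P : nat -> Prop) : (forall k, P k \/ ~ P k) -> (exists k, P k) ->
  exists k, P k /\ forall j, j < k -> ~ P j.
Proof.
  intros Hd [k Hk]. revert Hk. induction k as [k IH] using (well_founded_induction lt_wf). intros Hk.
  assert (Hc : (exists j, j < k /\ P j) \/ ~ (exists j, j < k /\ P j)).
  { clear IH Hk. induction k. right. intros (j & ? & _); lia.
    destruct IHk as [(j & ? & ?)|Hn]. left; exists j; split; auto; lia.
    destruct (Hd k). left; exists k; auto. right. intros (j & Hj & Pj).
    destruct (Nat.eq_dec j k). subst; auto. apply Hn; exists j; split; auto; lia. }
  destruct Hc as [(j & Hj & Pj)|Hn].
  - apply (IH j Hj Pj).
  - exists k; split; auto. intros j Hj Pj. apply Hn; eauto.
Qed.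

Definition enc (C : nat -> bool) x := if C x then 1 else 0.

Lemma next_ex (B : nat -> bool) (HB : infinite_set B) k :
  exists b, k <= b /\ B b = true /\ forall c, k <= c -> c < b -> B c = false.
Proof.
  destruct (least_nat (fun b => k <= b /\ B b = true)) as (b & (Hb1 & Hb2) & Hl).
  { intros b. destruct (le_lt_dec k b); [|right; lia]. destruct (B b) eqn:E; [left; auto|right; intros [_ H]; congruence]. }
  { destruct (HB k) as (n & ? & ?). eauto. }
  exists b. repeat split; auto. intros c Hc Hcb. destruct (B c) eqn:E; auto. exfalso; apply (Hl c Hcb); auto.
Qed.

Fixpoint pfun (nb : nat -> nat) n := match n with 0 => nb 0 | S n => nb (S (pfun nb n)) end.

Lemma principal_exists B : infinite_set B -> exists q, principal_function B q.
Proof.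
  intros HB.
  set (nb := fun k => proj1_sig (constructive_indefinite_description _ (next_ex B HB k))).
  assert (Hnb : forall k, k <= nb k /\ B (nb k) = true /\ forall c, k <= c -> c < nb k -> B c = false).
  { intros k. unfold nb. destruct constructive_indefinite_description; simpl; auto. }
  exists (pfun nb). split.
  - intros n. simpl. destruct (Hnb (S (pfun nb n))). lia.
  - assert (Hge : forall n, n <= pfun nb n).
    { induction n; simpl. apply Hnb. destruct (Hnb (S (pfun nb n))). lia. }
    assert (Hc : forall n c, c < pfun nb n -> B c = true -> exists i, i < n /\ pfun nb i = c).
    { induction n; intros c Hc HBc; simpl in Hc.
      - destruct (Hnb 0) as (_ & _ & H). rewrite H in HBc by lia. discriminate.
      - destruct (le_lt_dec c (pfun nb n)) as [Hle|Hlt].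
        + destruct (Nat.eq_dec c (pfun nb n)). exists n; split; auto.
          destruct (IHn c ltac:(lia) HBc) as (i & ? & ?). exists i; split; auto.
        + destruct (Hnb (S (pfun nb n))) as (_ & _ & H). rewrite H in HBc by lia. discriminate. }
    intros x. split.
    + intros Hx. assert (x < pfun nb (S x)) by (specialize (Hge (S x)); lia). destruct (Hc (S x) x) as (i & _ & Hi); eauto.
    + intros [n <-]. destruct n; simpl; apply Hnb.
Qed.

Section Main.
Variables (A C s : nat -> bool) (m : nat) (p : prog).
Hypothesis HA : infinite_set A.
Hypothesis HsA : forall i, s i = true -> A i = true.
Hypothesis Hsm : forall i, m <= i -> s i = false.

Definition cs := code_below s m.
Definition O n k := Nat.testbit (cs + 2 ^ n * k).
Definition Ak n k := forall i, Nat.testbit k i = true -> A (n + i) = true.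
Definition T n k x := sim (O n k) k p [x].

Lemma O_bit n k i : m <= n -> O n k i = if i <? n then s i else Nat.testbit k (i - n).
Proof.
  intros Hn. unfold O. rewrite testbit_add_pow.
  - destruct (i <? n) eqn:E; auto. unfold cs. rewrite code_bit.
    destruct (i <? m) eqn:E2; simpl; auto. apply Nat.ltb_ge in E2. rewrite Hsm; auto.
  - pose proof (code_lt s m). pose proof (Nat.pow_le_mono_r 2 m n ltac:(lia) Hn). unfold cs; lia.
Qed.

Lemma infA b : exists a, b <= a /\ A a = true.
Proof. apply HA. Qed.

Definition CODEP := PComp ADD [K cs; PComp MUL [PComp POW2 [PProj 0]; PProj 1]].
Definition TPROG := PComp (comp p 1) [PProj 1; CODEP; PProj 2].

Lemma TPROG_ok X n k x xs : eval X TPROG (n :: k :: x :: xs) (T n k x).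
Proof.
  unfold TPROG. eapply ev_comp.
  { evc. constructor; reflexivity.
    unfold CODEP. eapply ev_comp. { evc. apply K_ok. eapply ev_comp. { evc.
      eapply ev_comp. { evc. constructor; reflexivity. } apply POW2_ok. constructor; reflexivity. }
      apply MUL_ok. } apply ADD_ok.
    constructor; reflexivity. }
  apply comp_ok. reflexivity.
Qed.

Definition GKP := PMu (PComp NSGN [PComp TPROG [PProj 1; PProj 0; PProj 2]]).

Lemma GK_ok X n x xs : (exists k, T n k x <> 0) -> exists k, eval X GKP (n :: x :: xs) k /\ T n k x <> 0.
Proof.
  intros H. destruct (least_nat (fun k => T n k x <> 0)) as (k & Hk & Hl); auto.
  { intros k. destruct (Nat.eq_dec (T n k x) 0); auto. }
  exists k. split; auto. constructor.
  - eapply ev_comp. { evc. eapply ev_comp. { evc; constructor; reflexivity. } apply TPROG_ok. }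
    eapply eval_eq; [apply NSGN_ok|]. destruct (T n k x); [lia|reflexivity].
  - intros j Hj. exists 0. eapply ev_comp. { evc. eapply ev_comp. { evc; constructor; reflexivity. } apply TPROG_ok. }
    eapply eval_eq; [apply NSGN_ok|]. specialize (Hl j Hj). destruct (T n j x); [reflexivity|lia].
Qed.

Section Case3.
Hypothesis H2 : forall n k x v, m <= n -> Ak n k -> eval (O n k) p [x] v -> v = enc C x.
Hypothesis H1 : forall x n, m <= n -> exists k v, Ak n k /\ eval (O n k) p [x] v.

Lemma P1' x n B : m <= n -> exists k, B <= k /\ Ak n k /\ T n k x = S (enc C x).
Proof.
  intros Hn. destruct (H1 x n Hn) as (k0 & v & Hk0 & Hev).
  destruct (sim_complete _ _ _ _ Hev) as [s0 Hs0].
  destruct (sim_local (O n k0) s0 p [x]) as [U HU].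
  destruct (infA (n + U + s0 + B + k0 + 1)) as (a & Ha & HAa).
  set (L := a - n).
  set (k := code_below (fun i => Nat.testbit k0 i || (i =? L)) (S L)).
  assert (HkL : Nat.testbit k L = true).
  { unfold k. apply code_bit_true. lia. rewrite Nat.eqb_refl, orb_true_r. reflexivity. }
  assert (Hkb : L <= k). { pose proof (bit_le _ _ HkL). pose proof (lt_pow2 L). lia. }
  assert (HAk : Ak n k).
  { intros i Hi. unfold k in Hi. rewrite code_bit in Hi. apply andb_true_iff in Hi. destruct Hi as [_ Hi].
    apply orb_true_iff in Hi. destruct Hi as [Hi|Hi]. apply Hk0; auto.
    apply Nat.eqb_eq in Hi. subst i L. replace (n + (a - n)) with a by lia. auto. }
  assert (Hag : agree (O n k0) (O n k) U).
  { intros z Hz. rewrite !O_bit by auto. destruct (z <? n) eqn:E; auto.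
    unfold k. rewrite code_bit. apply Nat.ltb_ge in E.
    rewrite (proj2 (Nat.ltb_lt (z - n) (S L))) by lia.
    rewrite (proj2 (Nat.eqb_neq (z - n) L)) by lia. rewrite orb_false_r. reflexivity. }
  assert (HT : T n k x = S v).
  { unfold T. apply (sim_mono' _ _ s0); [lia|]. rewrite HU; auto. }
  exists k. repeat split; auto; try lia.
  rewrite HT. f_equal. eapply H2; eauto. eapply sim_sound; eauto.
Qed.

Definition ind N k x k' := sgn (T N k x) * sgn (T N k' x) * sgn ((T N k x - T N k' x) + (T N k' x - T N k x)).
Definition badsum N k := sumf (fun x => sumf (ind N k x) (S k)) (S k).

Lemma ind_nz N k x k' : ind N k x k' <> 0 -> T N k x <> 0 /\ T N k' x <> 0 /\ T N k x <> T N k' x.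
Proof.
  unfold ind. destruct (T N k x) as [|a]; destruct (T N k' x) as [|b]; simpl; try lia.
  intros H. repeat split; try lia. intros E. injection E; intros; subst. rewrite Nat.sub_diag in H. simpl in H. lia.
Qed.

Lemma ind_z N k x k' : T N k x <> 0 -> T N k' x <> 0 -> ind N k x k' = 0 -> T N k x = T N k' x.
Proof.
  unfold ind. destruct (T N k x) as [|a]; destruct (T N k' x) as [|b]; simpl; try lia.
  intros _ _ H. destruct (a - b + (b - a)) eqn:E; simpl in H; lia.
Qed.

Lemma badsum_nz N k : badsum N k <> 0 -> exists x k', x <= k /\ k' <= k /\ ind N k x k' <> 0.
Proof.
  unfold badsum. intros H. apply sumf_nz in H. destruct H as (x & Hx & H).
  apply sumf_nz in H. destruct H as (k' & Hk' & H). exists x, k'. repeat split; auto; lia.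
Qed.

Lemma badsum_z N k x k' : x <= k -> k' <= k -> badsum N k = 0 -> ind N k x k' = 0.
Proof.
  intros Hx Hk H. destruct (Nat.eq_dec (ind N k x k') 0); auto. exfalso.
  assert (badsum N k <> 0); [|lia]. unfold badsum. apply sumf_nz. exists x. split; [lia|].
  apply sumf_nz. exists k'. split; auto; lia.
Qed.

Definition Ta := PComp TPROG [PProj 3; PProj 2; PProj 1].
Definition Tb := PComp TPROG [PProj 3; PProj 0; PProj 1].
Definition IND := PComp MUL [PComp MUL [PComp SGN [Ta]; PComp SGN [Tb]];
                              PComp SGN [PComp ADD [PComp SUB [Ta; Tb]; PComp SUB [Tb; Ta]]]].

Lemma IND_ok X k' x k N xs : eval X IND (k' :: x :: k :: N :: xs) (ind N k x k').
Proof.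
  assert (HA' : eval X Ta (k' :: x :: k :: N :: xs) (T N k x)).
  { eapply ev_comp. { evc; constructor; reflexivity. } apply TPROG_ok. }
  assert (HB' : eval X Tb (k' :: x :: k :: N :: xs) (T N k' x)).
  { eapply ev_comp. { evc; constructor; reflexivity. } apply TPROG_ok. }
  unfold IND. eapply ev_comp. { evc.
    - eapply ev_comp. { evc. eapply ev_comp. { evc. exact HA'. } apply SGN_ok.
                             eapply ev_comp. { evc. exact HB'. } apply SGN_ok. } apply MUL_ok.
    - eapply ev_comp. { evc. eapply ev_comp. { evc.
        eapply ev_comp. { evc. exact HA'. exact HB'. } apply SUB_ok.
        eapply ev_comp. { evc. exact HB'. exact HA'. } apply SUB_ok. } apply ADD_ok. } apply SGN_ok. }
  apply MUL_ok.
Qed.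

Definition S1 := PRec (K 0) (PComp ADD [PProj 1; PComp IND [PProj 0; PProj 2; PProj 3; PProj 4]]).
Lemma S1_ok X j x k N xs : eval X S1 (j :: x :: k :: N :: xs) (sumf (ind N k x) j).
Proof.
  induction j; simpl. { constructor. exact (K_ok _ 0 _). }
  econstructor; [exact IHj|]. eapply ev_comp. { evc. constructor; reflexivity.
    eapply ev_comp. { evc; constructor; reflexivity. } apply IND_ok. } apply ADD_ok.
Qed.

Definition IND2 := PComp S1 [PComp PSucc [PProj 1]; PProj 0; PProj 1; PProj 2].
Lemma IND2_ok X x k N xs : eval X IND2 (x :: k :: N :: xs) (sumf (ind N k x) (S k)).
Proof.
  unfold IND2. eapply ev_comp. { evc. eapply ev_comp. { evc; constructor; reflexivity. } constructor.
    all: constructor; reflexivity. } apply S1_ok.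
Qed.

Definition S2 := PRec (K 0) (PComp ADD [PProj 1; PComp IND2 [PProj 0; PProj 2; PProj 3]]).
Lemma S2_ok X j k N xs : eval X S2 (j :: k :: N :: xs) (sumf (fun x => sumf (ind N k x) (S k)) j).
Proof.
  induction j; simpl. { constructor. exact (K_ok _ 0 _). }
  econstructor; [exact IHj|]. eapply ev_comp. { evc. constructor; reflexivity.
    eapply ev_comp. { evc; constructor; reflexivity. } apply IND2_ok. } apply ADD_ok.
Qed.

Definition BADSUM := PComp S2 [PComp PSucc [PProj 0]; PProj 0; PProj 1].
Lemma BADSUM_ok X k N xs : eval X BADSUM (k :: N :: xs) (badsum N k).
Proof.
  unfold BADSUM. eapply ev_comp. { evc. eapply ev_comp. { evc; constructor; reflexivity. } constructor.
    all: constructor; reflexivity. } apply S2_ok.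
Qed.

Definition NEXTP := PComp PSucc [PComp ADD [PProj 0; PMu (PComp NSGN [BADSUM])]].

Lemma bad_meets N k : m <= N -> badsum N k <> 0 -> exists b, N <= b < N + k /\ A b = false.
Proof.
  intros HN Hb. destruct (badsum_nz _ _ Hb) as (x & k' & Hx & Hk' & Hi).
  destruct (ind_nz _ _ _ _ Hi) as (Ha & Hb' & Hne).
  assert (Hnot : ~ (Ak N k /\ Ak N k')).
  { intros [HA1 HA2]. apply Hne.
    destruct (T N k x) as [|v1] eqn:E1; [lia|]. destruct (T N k' x) as [|v2] eqn:E2; [lia|].
    f_equal. rewrite (H2 N k x v1), (H2 N k' x v2); auto; eapply sim_sound; eauto. }
  assert (Hex : forall k'', k'' <= k -> ~ Ak N k'' -> exists b, N <= b < N + k /\ A b = false).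
  { intros k'' Hk'' HnA. destruct (classic (exists i, Nat.testbit k'' i = true /\ A (N + i) = false))
      as [(i & Hi1 & Hi2)|Hn].
    - exists (N + i). pose proof (bit_lt _ _ Hi1). split; auto; lia.
    - exfalso. apply HnA. intros i Hi2. destruct (A (N + i)) eqn:E; auto. exfalso; apply Hn; eauto. }
  destruct (classic (Ak N k)) as [HAk|HAk].
  - apply (Hex k'); auto.
  - apply (Hex k); auto.
Qed.

Lemma NEXT_ok X N : m <= N -> (exists k, badsum N k <> 0) ->
  exists N', eval X NEXTP [N] N' /\ N < N' /\ exists b, N <= b < N' /\ A b = false.
Proof.
  intros HN Hex. destruct (least_nat (fun k => badsum N k <> 0)) as (k & Hk & Hl); auto.
  { intros k. destruct (Nat.eq_dec (badsum N k) 0); auto. }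
  exists (S (N + k)). split; [|split; [lia|]].
  - unfold NEXTP. eapply ev_comp. { evc. eapply ev_comp. { evc. constructor; reflexivity.
      apply (ev_mu _ _ _ k).
      - eapply ev_comp. { evc. apply BADSUM_ok. }
        eapply eval_eq; [apply NSGN_ok|]. destruct (badsum N k); [lia|reflexivity].
      - intros j Hj. exists 0. eapply ev_comp. { evc. apply BADSUM_ok. }
        eapply eval_eq; [apply NSGN_ok|]. specialize (Hl j Hj). destruct (badsum N j); [reflexivity|lia]. }
      apply ADD_ok. } constructor.
  - destruct (bad_meets N k HN Hk) as (b & Hb & HAb). exists b. split; auto; lia.
Qed.

Definition CPROG n0 := PComp PRED [PComp TPROG [K n0; PComp GKP [K n0; PProj 0]; PProj 0]].

Lemma caseA n0 : m <= n0 -> (forall k, badsum n0 k = 0) -> computable_set C.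
Proof.
  intros Hn0 Hz. exists (CPROG n0). intros x.
  destruct (P1' x n0 0 Hn0) as (k0 & _ & _ & Hk0).
  destruct (GK_ok empty_oracle n0 x [] ltac:(exists k0; lia)) as (k1 & Hev & Hk1).
  destruct (P1' x n0 (x + k1) Hn0) as (k2 & Hk2 & _ & HT2).
  assert (E : T n0 k2 x = T n0 k1 x).
  { apply ind_z; auto. lia. apply badsum_z; auto; lia. }
  unfold CPROG. eapply ev_comp. { evc. eapply ev_comp. { evc. apply K_ok.
    eapply ev_comp. { evc. apply K_ok. constructor; reflexivity. } exact Hev.
    constructor; reflexivity. } apply TPROG_ok. }
  eapply eval_eq; [apply PRED_ok|]. rewrite <- E, HT2. reflexivity.
Qed.

Definition RP := PRec (K m) (PComp NEXTP [PProj 1]).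

Lemma caseB : (forall N, m <= N -> exists k, badsum N k <> 0) ->
  exists f, computable_fun f /\
    forall pB, principal_function (fun n => negb (A n)) pB -> forall j, pB j < f j.
Proof.
  intros HB.
  assert (Hex : forall j, exists N, eval empty_oracle RP [j] N /\ m <= N).
  { induction j.
    - exists m. split; auto. constructor. apply K_ok.
    - destruct IHj as (N & HN & HmN). destruct (NEXT_ok empty_oracle N HmN (HB N HmN)) as (N' & HN' & Hlt & _).
      exists N'. split; [|lia]. econstructor; [exact HN|]. eapply ev_comp. { evc; constructor; reflexivity. } exact HN'. }
  set (Nf := fun j => proj1_sig (constructive_indefinite_description _ (Hex j))).
  assert (HNf : forall j, eval empty_oracle RP [j] (Nf j) /\ m <= Nf j).
  { intros j. unfold Nf. destruct constructive_indefinite_description; simpl; auto. }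
  assert (Hstep : forall j, Nf j < Nf (S j) /\ exists b, Nf j <= b < Nf (S j) /\ A b = false).
  { intros j. destruct (HNf j) as [Hj Hmj].
    destruct (NEXT_ok empty_oracle (Nf j) Hmj (HB _ Hmj)) as (N' & HN' & Hlt & Hb).
    assert (Ej : eval empty_oracle RP [S j] N').
    { econstructor; [exact Hj|]. eapply ev_comp. { evc; constructor; reflexivity. } exact HN'. }
    rewrite (eval_det _ _ _ _ _ (proj1 (HNf (S j))) Ej). auto. }
  exists (fun j => Nf (S j)). split.
  - exists (PComp RP [PComp PSucc [PProj 0]]). intros j. eapply ev_comp.
    { evc. eapply ev_comp. { evc; constructor; reflexivity. } constructor. } apply HNf.
  - intros pB [Hinc Hrange].
    assert (Hmono : forall a b, a <= b -> pB a <= pB b).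
    { intros a b Hab. induction Hab; auto. specialize (Hinc m0). lia. }
    assert (Hc : forall j, exists t, j <= t /\ pB t < Nf (S j)).
    { induction j.
      - destruct (Hstep 0) as [_ (b & Hb & HAb)]. destruct (proj1 (Hrange b)) as [t Ht].
        rewrite HAb; reflexivity. exists t. split; [lia|]. lia.
      - destruct IHj as (t & Ht & Hpt). destruct (Hstep (S j)) as [_ (b & Hb & HAb)].
        destruct (proj1 (Hrange b)) as [t' Ht']. rewrite HAb; reflexivity.
        exists t'. split; [|lia].
        destruct (le_lt_dec t' t) as [Hle|Hlt]; [|lia].
        pose proof (Hmono _ _ Hle). lia. }
    intros j. destruct (Hc j) as (t & Ht & Hpt). pose proof (Hmono _ _ Ht). lia.
Qed.

End Case3.
Hypothesis HC : ~ computable_set C.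
Hypothesis HH : hyperimmune (fun n => negb (A n)).

Lemma stage : exists s' m', agree s s' m /\ (forall i, s' i = true -> A i = true) /\
  (forall i, m' <= i -> s' i = false) /\ m < m' /\ (exists i, m <= i < m' /\ s' i = true) /\
  (forall G, (forall i, G i = true -> A i = true) -> agree s' G m' -> ~ (forall x, eval G p [x] (enc C x))).
Proof.
  destruct (classic (exists n k x v, m <= n /\ Ak n k /\ eval (O n k) p [x] v /\ v <> enc C x)) as [Case1|N1].
  { destruct Case1 as (n & k & x & v & Hn & HAk & Hev & Hne).
    destruct (eval_local _ _ _ _ Hev) as [U HU].
    destruct (infA (U + n + k + m + 1)) as (a & Ha & HAa).
    set (M := U + n + k + m + 1) in *.
    exists (fun i => ((i <? M) && O n k i) || (i =? a)), (S a).
    repeat split.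
    - intros z Hz. rewrite O_bit by lia.
      rewrite (proj2 (Nat.ltb_lt z M)) by lia. rewrite (proj2 (Nat.ltb_lt z n)) by lia.
      rewrite (proj2 (Nat.eqb_neq z a)) by lia. simpl. rewrite orb_false_r. reflexivity.
    - intros i Hi. apply orb_true_iff in Hi. destruct Hi as [Hi|Hi].
      + apply andb_true_iff in Hi. destruct Hi as [_ Hi]. rewrite O_bit in Hi by lia.
        destruct (i <? n) eqn:E; auto. apply Nat.ltb_ge in E. apply HAk in Hi.
        replace (n + (i - n)) with i in Hi by lia. exact Hi.
      + apply Nat.eqb_eq in Hi. subst; auto.
    - intros i Hi. rewrite (proj2 (Nat.ltb_ge i M)) by lia. rewrite (proj2 (Nat.eqb_neq i a)) by lia. reflexivity.
    - lia.
    - exists a. split; [lia|]. rewrite Nat.eqb_refl, orb_true_r. reflexivity.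
    - intros G HGA Hag Hcomp. apply Hne. eapply eval_det; [|apply (Hcomp x)].
      apply HU. intros z Hz. rewrite <- Hag by lia.
      rewrite (proj2 (Nat.ltb_lt z M)) by lia. rewrite (proj2 (Nat.eqb_neq z a)) by lia.
      simpl. rewrite orb_false_r. reflexivity. }
  destruct (classic (exists x n, m <= n /\ forall k v, Ak n k -> ~ eval (O n k) p [x] v)) as [Case2|N2].
  { destruct Case2 as (x & n & Hn & Hno).
    destruct (infA n) as (a & Ha & HAa).
    exists (fun i => s i || (i =? a)), (S a).
    repeat split.
    - intros z Hz. rewrite (proj2 (Nat.eqb_neq z a)) by lia. rewrite orb_false_r. reflexivity.
    - intros i Hi. apply orb_true_iff in Hi. destruct Hi as [Hi|Hi]; auto.
      apply Nat.eqb_eq in Hi. subst; auto.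
    - intros i Hi. rewrite Hsm by lia. rewrite (proj2 (Nat.eqb_neq i a)) by lia. reflexivity.
    - lia.
    - exists a. split; [lia|]. rewrite Nat.eqb_refl, orb_true_r. reflexivity.
    - intros G HGA Hag Hcomp. destruct (eval_local _ _ _ _ (Hcomp x)) as [U HU].
      set (k := code_below (fun i => G (n + i)) U).
      apply (Hno k (enc C x)).
      + intros i Hi. unfold k in Hi. rewrite code_bit in Hi. apply andb_true_iff in Hi. apply HGA; tauto.
      + apply HU. intros z Hz. rewrite O_bit by lia. destruct (z <? n) eqn:E.
        * apply Nat.ltb_lt in E. rewrite <- Hag by lia. rewrite (proj2 (Nat.eqb_neq z a)) by lia.
          rewrite orb_false_r. reflexivity.
        * apply Nat.ltb_ge in E. unfold k. rewrite code_bit.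
          rewrite (proj2 (Nat.ltb_lt (z - n) U)) by lia. simpl. f_equal. lia. }
  exfalso.
  assert (H2 : forall n k x v, m <= n -> Ak n k -> eval (O n k) p [x] v -> v = enc C x).
  { intros n k x v Hn HAk Hev. destruct (Nat.eq_dec v (enc C x)); auto. exfalso. apply N1. eauto 10. }
  assert (H1 : forall x n, m <= n -> exists k v, Ak n k /\ eval (O n k) p [x] v).
  { intros x n Hn. apply NNPP. intros Hn'. apply N2. exists x, n. split; auto.
    intros k v HAk Hev. apply Hn'. eauto. }
  destruct (classic (exists n0, m <= n0 /\ forall k, badsum n0 k = 0)) as [(n0 & Hn0 & Hz)|N3].
  - apply HC. eapply caseA; eauto.
  - destruct (caseB H2) as (f & Hf & Hdom).
    { intros N HN. apply NNPP. intros Hn. apply N3. exists N. split; auto.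
      intros k. destruct (Nat.eq_dec (badsum N k) 0); auto. exfalso; apply Hn; eauto. }
    destruct HH as [Hinf Hhyp].
    destruct (principal_exists _ Hinf) as [pB HpB].
    destruct (Hhyp pB HpB f Hf) as [n Hn]. specialize (Hdom pB HpB n). lia.
Qed.

End Main.

Fixpoint lcode (l : list nat) : nat :=
  match l with [] => 0 | x :: l => S (Cantor.to_nat (x, lcode l)) end.

Fixpoint pcode (p : prog) : nat :=
  match p with
  | PZero => Cantor.to_nat (0, 0)
  | PSucc => Cantor.to_nat (1, 0)
  | PProj i => Cantor.to_nat (2, i)
  | POrc => Cantor.to_nat (3, 0)
  | PComp f gs => Cantor.to_nat (4, Cantor.to_nat (pcode f, lcode (map pcode gs)))
  | PRec f g => Cantor.to_nat (5, Cantor.to_nat (pcode f, pcode g))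
  | PMu f => Cantor.to_nat (6, pcode f)
  end.

Lemma to_nat_inj a b : Cantor.to_nat a = Cantor.to_nat b -> a = b.
Proof. intros H. rewrite <- (Cantor.cancel_of_to a), <- (Cantor.cancel_of_to b), H. reflexivity. Qed.

Lemma lcode_inj l1 l2 : lcode l1 = lcode l2 -> l1 = l2.
Proof.
  revert l2; induction l1; destruct l2; cbn [lcode]; intros H; try discriminate; auto.
  apply Nat.succ_inj in H. apply to_nat_inj in H. rename H into H'. injection H'; intros; subst. f_equal; auto.
Qed.

Lemma tn2 a b c d : Cantor.to_nat (a, b) = Cantor.to_nat (c, d) -> a = c /\ b = d.
Proof. intros H. apply to_nat_inj in H. injection H; auto. Qed.

Lemma pcode_inj p : forall q, pcode p = pcode q -> p = q.
Proof.
  induction p using prog_ind'; destruct q; cbn [pcode]; intros E; apply tn2 in E;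
    destruct E as [E0 E]; try discriminate; auto.
  - apply tn2 in E. destruct E as [E2 E1]. apply IHp in E2. subst. f_equal.
    apply lcode_inj in E1. clear -H E1. revert l E1.
    induction H as [|g gs Hg Hgs IH]; intros [|q' l'] E; cbn [map] in E; try discriminate; auto.
    injection E; intros E3 E4. f_equal; auto.
  - apply tn2 in E. destruct E. f_equal; auto.
  - f_equal; auto.
Qed.

Section Build.
Variables (A C : nat -> bool).
Hypothesis HC : ~ computable_set C.
Hypothesis HA : infinite_set A.
Hypothesis HH : hyperimmune (fun n => negb (A n)).

Definition inv (sm : (nat -> bool) * nat) :=
  (forall i, fst sm i = true -> A i = true) /\ (forall i, snd sm <= i -> fst sm i = false).

Definition good e (sm sm' : (nat -> bool) * nat) :=
  inv sm' /\ agree (fst sm) (fst sm') (snd sm) /\ snd sm < snd sm' /\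
  (exists i, snd sm <= i < snd sm' /\ fst sm' i = true) /\
  (forall q, pcode q = e -> forall G, (forall i, G i = true -> A i = true) ->
      agree (fst sm') G (snd sm') -> ~ (forall x, eval G q [x] (enc C x))).

Lemma stage_total e sm : exists sm', inv sm -> good e sm sm'.
Proof.
  destruct (classic (inv sm)) as [[Hi1 Hi2]|Hn]; [|exists sm; tauto].
  destruct (classic (exists q, pcode q = e)) as [[q Hq]|Hnq].
  - destruct (stage A C (fst sm) (snd sm) q HA Hi1 Hi2 HC HH) as (s' & m' & H1 & H2 & H3 & H4 & H5 & H6).
    exists (s', m'). intros _. unfold good, inv; simpl. repeat split; auto.
    intros q' Hq'. assert (q' = q) by (apply pcode_inj; congruence). subst. auto.
  - destruct (stage A C (fst sm) (snd sm) PZero HA Hi1 Hi2 HC HH) as (s' & m' & H1 & H2 & H3 & H4 & H5 & H6).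
    exists (s', m'). intros _. unfold good, inv; simpl. repeat split; auto.
    intros q' Hq'. exfalso; eauto.
Qed.

Definition step e sm := proj1_sig (constructive_indefinite_description _ (stage_total e sm)).

Lemma step_spec e sm : inv sm -> good e sm (step e sm).
Proof. unfold step. destruct constructive_indefinite_description; simpl; auto. Qed.

Fixpoint st (e : nat) : (nat -> bool) * nat :=
  match e with 0 => (fun _ => false, 0) | S e => step e (st e) end.

Lemma st_inv e : inv (st e).
Proof.
  induction e; simpl. { split; simpl; auto. discriminate. }
  apply step_spec; auto.
Qed.

Lemma st_good e : good e (st e) (st (S e)).
Proof. apply step_spec, st_inv. Qed.

Lemma st_ge e : e <= snd (st e).
Proof. induction e; [simpl; lia|]. destruct (st_good e) as (_ & _ & H & _). lia. Qed.

Lemma st_mono e e' : e <= e' -> snd (st e) <= snd (st e').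
Proof. induction 1; auto. destruct (st_good m) as (_ & _ & H' & _). lia. Qed.

Lemma st_agree e e' : e <= e' -> agree (fst (st e)) (fst (st e')) (snd (st e)).
Proof.
  induction 1. { intros z _; reflexivity. }
  intros z Hz. rewrite IHle by auto. destruct (st_good m) as (_ & Hag & _).
  apply Hag. pose proof (st_mono _ _ H). lia.
Qed.

Definition Gset x := fst (st (S x)) x.

Lemma G_agree e : agree (fst (st e)) Gset (snd (st e)).
Proof.
  intros z Hz. unfold Gset. destruct (le_lt_dec (S z) e).
  - symmetry. apply st_agree; auto. pose proof (st_ge (S z)). lia.
  - apply st_agree; auto. lia.
Qed.

Theorem build : exists G : nat -> bool, subset G A /\ infinite_set G /\ ~ turing_computes G C.
Proof.
  exists Gset. split; [|split].
  - intros n Hn. unfold Gset in Hn. apply (proj1 (st_inv (S n))). auto.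
  - intros N. destruct (st_good N) as (_ & _ & _ & (i & Hi & Hsi) & _).
    exists i. split. { pose proof (st_ge N). lia. }
    rewrite <- (G_agree (S N)); auto. lia.
  - intros [q Hq]. destruct (st_good (pcode q)) as (_ & _ & _ & _ & Hreq).
    apply (Hreq q eq_refl Gset).
    + intros n Hn. unfold Gset in Hn. apply (proj1 (st_inv (S n))). auto.
    + apply G_agree.
    + intros x. exact (Hq x).
Qed.
End Build.

Theorem proposition3p4 (C A : nat -> bool) :
  ~ computable_set C ->
  infinite_set A ->
  hyperimmune (fun n => negb (A n)) ->
  exists G : nat -> bool,
    subset G A /\ infinite_set G /\ ~ turing_computes G C.
Proof. intros. apply build; auto. Qed.
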